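(* Let $(G,\alpha)$ be a finite Hom-group and $H\preceq G$. Then $|H|$ divides $|G|$.
   Context: A Hom-group is a tuple $(G,\mu,1,\alpha)$ where $G$ is a set, $\mu:G\times G\to G$ is a binary operation written $\mu(g,h)=gh$, $1\in G$ is a distinguished element, and $\alpha:G\to G$ is a bijection, such that: (1) Hom-associativity: $\alpha(g)(hk)=(gh)\alpha(k)$ for all $g,h,k\in G$; (2) $\alpha(gk)=\alpha(g)\alpha(k)$ for all $g,k$; (3) Hom-unitality: $g1=1g=\alpha(g)$ for all $g$, and $\alpha(1)=1$; (4) for every $g\in G$ there exists $g^{-1}\in G$ with $gg^{-1}=g^{-1}g=1$ (such an inverse is unique). A Hom-subgroup of $(G,\alpha)$ is a subset $H\subseteq G$ such that $H$, with the restriction of the multiplication of $G$, the element $1$, and the restriction of $\alpha$, is itself a Hom-group (in particular $1\in H$, $H$ is closed under multiplication and inverses, and $\alpha$ restricts to a bijection $H\to H$). We write $H\preceq G$. *)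

(* Defs.v *)
From mathcomp Require Import all_boot.
Set Implicit Arguments. Unset Strict Implicit. Unset Printing Implicit Defensive.

Definition is_hom_group (G : Type) (mu : G -> G -> G) (e : G) (alpha : G -> G) : Prop :=
  [/\ bijective alpha,
      (forall g h k, mu (alpha g) (mu h k) = mu (mu g h) (alpha k)),
      (forall g k, alpha (mu g k) = mu (alpha g) (alpha k)),
      (forall g, mu g e = alpha g /\ mu e g = alpha g) /\ alpha e = e
    & (forall g, exists g', mu g g' = e /\ mu g' g = e)].

(* H is a Hom-subgroup of (G, mu, e, alpha): H with the restricted operations
   is itself a Hom-group. *)
Definition is_hom_subgroup (G : finType) (mu : G -> G -> G) (e : G) (alpha : G -> G)
    (H : {set G}) : Prop :=
  [/\ e \in H,
      (forall g h, g \in H -> h \in H -> mu g h \in H),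
      (forall g, g \in H -> alpha g \in H) /\
        {in H &, injective alpha} /\ (forall h, h \in H -> exists2 g, g \in H & alpha g = h),
      (forall g h k, g \in H -> h \in H -> k \in H ->
          mu (alpha g) (mu h k) = mu (mu g h) (alpha k)) /\
      (forall g k, g \in H -> k \in H -> alpha (mu g k) = mu (alpha g) (alpha k)) /\
      ((forall g, g \in H -> mu g e = alpha g /\ mu e g = alpha g) /\ alpha e = e)
    & (forall g, g \in H -> exists2 g', g' \in H & mu g g' = e /\ mu g' g = e)].

(* Main.v *)
From HB Require Import structures.
Require Import Defs.
From mathcomp Require Import all_boot all_fingroup.
Set Implicit Arguments. Unset Strict Implicit.

Section Aux.
Context (G : finType) (mu : G -> G -> G) (e : G) (alpha : G -> G).
Definition ainv (y : G) : G := odflt y [pick x | alpha x == y].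
Definition hmul (x y : G) : G := ainv (mu x y).
Definition hinv (x : G) : G := odflt x [pick g | (mu x g == e) && (mu g x == e)].
End Aux.

Definition hgT (G : finType) (mu : G -> G -> G) (e : G) (alpha : G -> G)
  (P : is_hom_group mu e alpha) : Type := G.

HB.instance Definition _ G mu e alpha P := Finite.on (@hgT G mu e alpha P).

Lemma ainvK (G : finType) (mu : G -> G -> G) (e : G) (alpha : G -> G) :
  is_hom_group mu e alpha -> cancel alpha (ainv alpha) /\ cancel (ainv alpha) alpha.
Proof.
case=> [[f fK Kf] _ _ _ _].
have K2 : cancel (ainv alpha) alpha.
  move=> y; rewrite /ainv; case: pickP => [x /eqP //|/(_ (f y))].
  by rewrite Kf eqxx.
by split=> // x; apply: (can_inj fK); rewrite K2.
Qed.

Section Grp.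
Context (G : finType) (mu : G -> G -> G) (e : G) (alpha : G -> G)
  (P : is_hom_group mu e alpha).

Lemma hmulA : associative (hmul mu alpha : hgT P -> hgT P -> hgT P).
Proof.
have [aK Ka] := ainvK P.
have [_ hA hM [hU he] _] := P.
move=> x y z; rewrite /hmul; congr (ainv alpha _).
apply: (can_inj aK).
by rewrite !hM !Ka hA.
Qed.

Lemma hmul1 : left_id (e : hgT P) (hmul mu alpha).
Proof.
have [aK Ka] := ainvK P.
have [_ hA hM [hU he] _] := P.
by move=> x; rewrite /hmul (proj2 (hU x)) aK.
Qed.

Lemma hmulV : left_inverse (e : hgT P) (hinv mu e) (hmul mu alpha).
Proof.
have [aK Ka] := ainvK P.
have [_ hA hM [hU he] hI] := P.
have ae : ainv alpha e = e by rewrite -{1}he aK.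
move=> x; rewrite /hmul /hinv; case: pickP => [g /andP[_ /eqP ->]|].
  exact: ae.
by have [g [g1 g2]] := hI x => /(_ g); rewrite g1 g2 !eqxx.
Qed.

End Grp.

HB.instance Definition _ G mu e alpha P :=
  Finite_isGroup.Build (@hgT G mu e alpha P) (@hmulA G mu e alpha P)
    (@hmul1 G mu e alpha P) (@hmulV G mu e alpha P).

Theorem mainTheorem9 (G : finType) (mu : G -> G -> G) (e : G) (alpha : G -> G)
    (H : {set G}) :
  is_hom_group mu e alpha -> is_hom_subgroup mu e alpha H -> #|H| %| #|G|.
Proof.
move=> P [He HM [HA [Hinj Hsurj]] _ _].
have [aK Ka] := ainvK P.
pose H' : {set hgT P} := [set x : hgT P | (x : G) \in H].
have gH : group_set H'.
  apply/group_setP; split; first by rewrite inE.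
  move=> x y; rewrite !inE => xH yH; change (hmul mu alpha x y \in H).
  have [g gH ag] := Hsurj _ (HM _ _ xH yH).
  by rewrite /hmul -ag aK.
have := cardSg (subsetT (Group gH)).
rewrite cardsT /=.
have -> : #|H'| = #|H|.
  pose f := fun x : hgT P => (x : G).
  have -> : H = f @: H'.
    apply/setP => x; apply/idP/imsetP => [xH|[y]].
      by exists (x : hgT P); rewrite ?inE.
    by rewrite inE => yH ->.
  by rewrite card_imset.
have bf : bijective (fun x : hgT P => (x : G)) by exists (fun x : G => (x : hgT P)).
by rewrite (bij_eq_card bf).
Qed.
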